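(* Let $h:[0,1]\to\mathbb{R}$ be continuous with a single turning point at $\delta\in(0,1)$, strictly decreasing on $[0,\delta]$ and strictly increasing on $[\delta,1]$, and with $\lim_{u\to0}h(u)=\lim_{u\to1}h(u)$. Write $h_\ell$ for the restriction of $h$ to $[0,\delta]$ and $h_r$ for its restriction to $[\delta,1]$. Let $F_h$ be the distribution function of $h(U_0)$, $U_0\sim\mathcal{U}(0,1)$. Then $T_h=F_h\circ h$ is a v-transform with fulcrum $\delta$ and generator $\Psi(x)=(1-\delta)^{-1}\big(1-h_r^{-1}\circ h_\ell(\delta x)\big)$. If $h$ is symmetric about $\delta=0.5$, then $\Psi(x)=x$ and $T_h=T_\vee$, where $T_\vee(u)=|2u-1|$.
   Context: A v-transform with fulcrum $\delta\in(0,1)$ and generator $\Psi$ (a continuous, strictly increasing distribution function on $[0,1]$) is the function $T(u)=(1-u)-(1-\delta)\Psi(u/\delta)$ for $u\le\delta$ and $T(u)=u-\delta\Psi^{-1}\big(\tfrac{1-u}{1-\delta}\big)$ for $u>\delta$. *)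

(* Defs.v *)
From HB Require Import structures.
From mathcomp Require Import all_boot all_order all_algebra.
From mathcomp Require Import all_classical all_reals all_analysis.
Set Implicit Arguments. Unset Strict Implicit. Unset Printing Implicit Defensive.
Import Order.TTheory GRing.Theory Num.Theory.
Import numFieldNormedType.Exports.
Local Open Scope classical_set_scope.
Local Open Scope ring_scope.

Section Defs.
Variable R : realType.

(* inverse of f restricted to the set A (a chosen preimage of y in A;
   unique whenever f is injective on A, 0 if y has no preimage in A) *)
Definition inv_on (f : R -> R) (A : set R) (y : R) : R :=
  xget 0 [set x | A x /\ f x = y].

Definition strict_incr_on (f : R -> R) (a b : R) : Prop :=
  forall x y, a <= x -> x < y -> y <= b -> f x < f y.

Definition strict_decr_on (f : R -> R) (a b : R) : Prop :=
  forall x y, a <= x -> x < y -> y <= b -> f y < f x.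

Definition is_generator (Psi : R -> R) : Prop :=
  {within `[0, 1], continuous Psi} /\ strict_incr_on Psi 0 1 /\
  Psi 0 = 0 /\ Psi 1 = 1.

Definition vtransform (delta : R) (Psi : R -> R) (u : R) : R :=
  if u <= delta then (1 - u) - (1 - delta) * Psi (u / delta)
  else u - delta * inv_on Psi `[0, 1] ((1 - u) / (1 - delta)).

Definition is_vtransform (T : R -> R) (delta : R) (Psi : R -> R) : Prop :=
  0 < delta < 1 /\ is_generator Psi /\
  forall u, 0 <= u <= 1 -> T u = vtransform delta Psi u.

(* Distribution function of h(U0), U0 ~ U(0,1):
   F_h(x) = Leb({u in [0,1] | h u <= x}). *)
Definition distF (h : R -> R) (x : R) : R :=
  fine ((@lebesgue_measure R) (`[0, 1] `&` [set u | h u <= x])).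

Definition T_h (h : R -> R) : R -> R := fun u => distF h (h u).

Definition Psi_h (h : R -> R) (delta : R) (x : R) : R :=
  (1 - delta)^-1 * (1 - inv_on h `[delta, 1] (h (delta * x))).

End Defs.

(* Main.v *)
Require Import Defs.
From HB Require Import structures.
From mathcomp Require Import all_boot all_order all_algebra.
From mathcomp Require Import all_classical all_reals all_analysis.
From mathcomp Require Import ring lra.
Import Order.TTheory GRing.Theory Num.Theory.
Import numFieldNormedType.Exports.
Local Open Scope classical_set_scope.
Local Open Scope ring_scope.

Lemma inv_onP (R : realType) (f : R -> R) (A : set R) y x :
  A x -> f x = y -> (forall x', A x' -> f x' = y -> x' = x) -> inv_on f A y = x.
Proof.
move=> Ax fx uq; rewrite /inv_on; case: xgetP => [z _ [Az fz]|nP].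
  exact: uq.
by case: (nP x).
Qed.

Section S.
Variable R : realType.
Variables (h : R -> R) (d : R).
Hypothesis d01 : 0 < d < 1.
Hypothesis hc : {within `[0, 1], continuous h}.
Hypothesis hdec : strict_decr_on h 0 d.
Hypothesis hinc : strict_incr_on h d 1.
Hypothesis h01 : h 0 = h 1.
Let d0 : 0 < d. Proof. by case/andP: d01. Qed.
Let d1 : d < 1. Proof. by case/andP: d01. Qed.

Lemma dle x y : 0 <= x <= d -> 0 <= y <= d -> (h x <= h y) = (y <= x).
Proof.
move=> /andP[x0 xd] /andP[y0 yd].
case: (ltgtP x y) => [xy|yx|->]; last by rewrite !lexx.
- by rewrite leNgt (hdec _ _ x0 xy yd).
- by rewrite (ltW (hdec _ _ y0 yx xd)).
Qed.

Lemma ile x y : d <= x <= 1 -> d <= y <= 1 -> (h x <= h y) = (x <= y).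
Proof.
move=> /andP[x0 xd] /andP[y0 yd].
case: (ltgtP x y) => [xy|yx|->]; last by rewrite !lexx.
- by rewrite (ltW (hinc _ _ x0 xy yd)).
- by rewrite leNgt (hinc _ _ y0 yx xd).
Qed.

Lemma sub01 (a b : R) : 0 <= a -> b <= 1 -> `[a, b] `<=` (`[0, 1] : set R).
Proof.
move=> a0 b1 x /=; rewrite !in_itv /= => /andP[ax xb].
apply/andP; split; [exact: le_trans ax| exact: le_trans b1].
Qed.

Lemma r_ex y : h d <= y <= h 0 -> exists2 x, d <= x <= 1 & h x = y.
Proof.
move=> hy.
have hd1 : h d <= h 1 by rewrite ile ?lexx ?ltW.
have hm : Num.min (h d) (h 1) <= y <= Num.max (h d) (h 1) by rewrite min_l // max_r // -h01.
have [c] := @IVT R h d 1 y (ltW d1)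
  (continuous_subspaceW (@sub01 _ _ (ltW d0) (lexx (1:R))) hc) hm.
by rewrite in_itv /= => ? ?; exists c.
Qed.

Lemma l_ex y : h d <= y <= h 0 -> exists2 x, 0 <= x <= d & h x = y.
Proof.
move=> hy.
have hd1 : h d <= h 0 by rewrite dle ?lexx ?ltW.
have hm : Num.min (h 0) (h d) <= y <= Num.max (h 0) (h d) by rewrite min_r // max_l.
have [c] := @IVT R h 0 d y (ltW d0)
  (continuous_subspaceW (@sub01 _ _ (lexx (0:R)) (ltW d1)) hc) hm.
by rewrite in_itv /= => ? ?; exists c.
Qed.


Local Notation r := (inv_on h `[d, 1]).
Local Notation l := (inv_on h `[0, d]).

Lemma itvP (a b x : R) : `[a, b]%classic x <-> a <= x <= b.
Proof. by rewrite /= in_itv. Qed.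

Lemma r_h x : d <= x <= 1 -> r (h x) = x.
Proof.
move=> xin; apply: inv_onP => // x' /itvP x'in hx.
by apply/eqP; rewrite eq_le -(ile _ _ x'in xin) -(ile _ _ xin x'in) hx lexx.
Qed.

Lemma l_h x : 0 <= x <= d -> l (h x) = x.
Proof.
move=> xin; apply: inv_onP => // x' /itvP x'in hx.
by apply/eqP; rewrite eq_le -(dle _ _ xin x'in) -(dle _ _ x'in xin) hx lexx.
Qed.

Lemma hrange x : 0 <= x <= 1 -> h d <= h x <= h 0.
Proof.
move=> /andP[x0 x1]; case: (lerP x d) => xd.
  by rewrite !dle ?xd ?x0 ?lexx ?ltW.
by rewrite h01 !ile ?x1 ?(ltW xd) ?lexx ?ltW.
Qed.

Lemma r_spec y : h d <= y <= h 0 -> d <= r y <= 1 /\ h (r y) = y.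
Proof. by move=> /r_ex [x xin <-]; rewrite r_h. Qed.

Lemma l_spec y : h d <= y <= h 0 -> 0 <= l y <= d /\ h (l y) = y.
Proof. by move=> /l_ex [x xin <-]; rewrite l_h. Qed.


Local Notation Psi := (Psi_h h d).

Lemma dx_in x : 0 <= x <= 1 -> 0 <= d * x <= d.
Proof. move=> /andP[x0 x1]; apply/andP; split; first exact: mulr_ge0 (ltW d0) x0.
by rewrite ler_piMr // ltW. Qed.

Lemma q_spec x : 0 <= x <= 1 -> d <= r (h (d * x)) <= 1 /\ h (r (h (d * x))) = h (d * x).
Proof.
move=> xin; apply: r_spec; apply: hrange.
have /andP[a b] := dx_in _ xin; rewrite a /=; exact: le_trans b (ltW d1).
Qed.

Lemma Psi_mono : {in `[0, 1] &, {mono Psi : x y / x <= y}}.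
Proof.
move=> x y; rewrite !in_itv /= => xin yin.
rewrite /Psi /Psi_h ler_pM2l; last by rewrite invr_gt0 subr_gt0.
rewrite lerD2l lerN2.
have [qx hqx] := q_spec _ xin; have [qy hqy] := q_spec _ yin.
rewrite -(ile _ _ qy qx) hqx hqy dle ?dx_in //.
by rewrite ler_pM2l.
Qed.

Lemma Psi0 : Psi 0 = 0.
Proof. by rewrite /Psi /Psi_h mulr0 h01 r_h ?lexx ?ltW // subrr mulr0. Qed.

Lemma Psi1 : Psi 1 = 1.
Proof.
rewrite /Psi /Psi_h mulr1 r_h ?lexx ?ltW // mulVf //.
by rewrite subr_eq0 eq_sym lt_eqF.
Qed.

Lemma Psi_surj : set_surj `[0, 1] `[Psi 0, Psi 1] Psi.
Proof.
rewrite Psi0 Psi1 => y /itvP /andP[y0 y1].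
have zin : d <= 1 - (1 - d) * y <= 1.
  have e1 : 0 <= 1 - d by rewrite subr_ge0 ltW.
  have e2 : 0 <= 1 - y by rewrite subr_ge0.
  have h1 := mulr_ge0 e1 e2.
  have h2 := mulr_ge0 e1 y0.
  apply/andP; split; nra.
set z := 1 - (1 - d) * y in zin *.
have zin' : 0 <= z <= 1.
  by case/andP: zin => a b; rewrite b (le_trans (ltW d0) a).
have [/andP[w0 wd] hw] := l_spec _ (hrange _ zin').
have dn0 : d != 0 by rewrite gt_eqF.
exists (l (h z) / d).
  apply/itvP; rewrite divr_ge0 ?(ltW d0) //= ler_pdivrMr // mul1r.
  by []. rewrite /Psi_h mulrCA mulfV // mulr1 hw r_h //.
have -> : 1 - z = (1 - d) * y by rewrite /z; ring.
by rewrite mulKf // subr_eq0 eq_sym lt_eqF.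
Qed.


Lemma Psi_gen : is_generator Psi.
Proof.
split; first exact: (@segment_inc_surj_continuous R 0 1 Psi Psi_mono Psi_surj).
split; last by rewrite Psi0 Psi1.
move=> x y x0 xy y1.
have xin : x \in `[0, 1] by rewrite in_itv /= x0 (le_trans (ltW xy) y1).
have yin : y \in `[0, 1] by rewrite in_itv /= y1 (le_trans x0 (ltW xy)).
by rewrite ltNge Psi_mono // -ltNge.
Qed.

Lemma T_left u : 0 <= u <= d -> T_h h u = r (h u) - u.
Proof.
move=> uin; have uin01 : 0 <= u <= 1.
  by case/andP: uin => a b; rewrite a (le_trans b (ltW d1)).
have [/andP[b0 b1] hb] := r_spec _ (hrange _ uin01).
set b := r (h u) in b0 b1 hb *.
rewrite /T_h /distF.
have -> : `[0, 1] `&` [set v | h v <= h u] = `[u, b]%classic.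
  apply/seteqP; split => v /=.
  - move=> [/itvP/andP[v0 v1] hv]; apply/itvP.
    have /andP[u0 ud] := uin.
    case: (lerP v d) => vd.
      rewrite (dle _ _ (_ : 0 <= v <= d) uin) in hv; last by rewrite v0 vd.
      by rewrite hv (le_trans vd b0).
    rewrite -hb (ile _ _ (_ : d <= v <= 1) (_ : d <= b <= 1)) in hv; 
      last (by rewrite b0 b1); last by rewrite v1 ltW.
    by rewrite hv (le_trans ud (ltW vd)).
  - move=> /itvP/andP[uv vb].
    have /andP[u0 ud] := uin.
    split; first by apply/itvP; rewrite (le_trans u0 uv) (le_trans vb b1).
    case: (lerP v d) => vd.
      by rewrite (dle _ _ (_ : 0 <= v <= d) (_ : 0 <= u <= d)) ?uv ?u0 ?ud ?vd ?(le_trans u0 uv).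
    rewrite -hb (ile _ _ (_ : d <= v <= 1) (_ : d <= b <= 1)) ?vb ?b0 ?b1 ?(ltW vd) //.
    exact: le_trans vb b1.
rewrite lebesgue_measure_itv /=.
case: ifP => [_|]; first by rewrite -EFinD.
rewrite lte_fin => /negbT; rewrite -leNgt => bu.
have /andP[_ ud] := uin.
have -> : b = u by apply/le_anti; rewrite bu (le_trans ud b0).
by rewrite subrr.
Qed.


Lemma T_right u : d < u <= 1 -> T_h h u = u - l (h u).
Proof.
move=> /andP[du u1].
have uin : d <= u <= 1 by rewrite u1 ltW.
have uin01 : 0 <= u <= 1 by rewrite u1 (le_trans (ltW d0) (ltW du)).
have [/andP[a0 ad] ha] := l_spec _ (hrange _ uin01).
set a := l (h u) in a0 ad ha *.
rewrite /T_h /distF.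
have -> : `[0, 1] `&` [set v | h v <= h u] = `[a, u]%classic.
  apply/seteqP; split => v /=.
  - move=> [/itvP/andP[v0 v1] hv]; apply/itvP.
    case: (lerP v d) => vd.
      rewrite -ha (dle _ _ (_ : 0 <= v <= d) (_ : 0 <= a <= d)) in hv;
        last (by rewrite a0 ad); last by rewrite v0 vd.
      by rewrite hv (le_trans vd (ltW du)).
    rewrite (ile _ _ (_ : d <= v <= 1) uin) in hv; last by rewrite v1 ltW.
    by rewrite hv (le_trans ad (ltW vd)).
  - move=> /itvP/andP[av vu].
    split; first by apply/itvP; rewrite (le_trans a0 av) (le_trans vu u1).
    case: (lerP v d) => vd.
      have vin : 0 <= v <= d by rewrite vd (le_trans a0 av).
      have ain : 0 <= a <= d by rewrite a0 ad.
      by rewrite -ha (dle _ _ vin ain).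
    by rewrite (ile _ _ (_ : d <= v <= 1) uin) ?vu ?(ltW vd) ?(le_trans vu u1).
rewrite lebesgue_measure_itv /=.
case: ifP => [_|]; first by rewrite -EFinD.
by rewrite lte_fin (le_lt_trans ad du).
Qed.


Lemma part1 : is_vtransform (T_h h) d Psi.
Proof.
split; first exact: d01.
split; first exact: Psi_gen.
have dn0 : d != 0 by rewrite gt_eqF.
have d1n0 : 1 - d != 0 by rewrite subr_eq0 eq_sym lt_eqF.
move=> u /andP[u0 u1]; rewrite /vtransform; case: ifP => ud.
  rewrite T_left ?u0 //.
  rewrite /Psi_h.  have -> : d * (u / d) = u by rewrite mulrCA mulfV ?mulr1.
  rewrite (mulrA (1 - d)) mulfV // mul1r.
  by ring.
have du : d < u by rewrite ltNge ud.
rewrite T_right ?du //.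
have uin01 : 0 <= u <= 1 by rewrite u0 u1.
have [/andP[a0 ad] ha] := l_spec _ (hrange _ uin01).
have xin : 0 <= l (h u) / d <= 1.
  by rewrite divr_ge0 ?(ltW d0) //= ler_pdivrMr // mul1r.
have PsiE : Psi (l (h u) / d) = (1 - u) / (1 - d).
  rewrite /Psi_h mulrCA mulfV // mulr1 ha r_h ?u1 ?(ltW du) //.
  by rewrite mulrC.
rewrite (@inv_onP _ Psi `[0, 1] ((1 - u) / (1 - d)) (l (h u) / d)) //.
- by rewrite mulrCA mulfV ?mulr1.
move=> x' /itvP x'in; rewrite -PsiE => e.
have x'in' : x' \in `[0, 1] by rewrite in_itv.
have xin' : l (h u) / d \in `[0, 1] by rewrite in_itv.
apply/eqP; rewrite eq_le -(Psi_mono _ _ x'in' xin') -(Psi_mono _ _ xin' x'in') e lexx.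
by [].
Qed.

Hypothesis dE : d = 1 / 2.
Hypothesis hsym : forall x, 0 <= x <= 1 / 2 -> h (1 / 2 - x) = h (1 / 2 + x).

Lemma Psi_id x : 0 <= x <= 1 -> Psi x = x.
Proof.
move=> /andP[x0 x1].
have tin : 0 <= 1 / 2 - d * x <= 1 / 2 by rewrite dE; apply/andP; split; lra.
have := hsym _ tin.
have -> : 1 / 2 - (1 / 2 - d * x) = d * x by ring.
have -> : 1 / 2 + (1 / 2 - d * x) = 1 - d * x by rewrite dE; field.
move=> e; rewrite /Psi_h e r_h; last by rewrite dE; apply/andP; split; lra.
by rewrite dE; field.
Qed.

Lemma T_abs u : 0 <= u <= 1 -> T_h h u = `|2 * u - 1|.
Proof.
move=> uin; have [_ [_ ->]] := part1 => //.
have /andP[u0 u1] := uin.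
rewrite /vtransform; case: ifP => ud.
  rewrite Psi_id; last first.
    by rewrite dE; apply/andP; split; rewrite dE in ud; lra.
  rewrite ler0_norm; last by rewrite dE in ud; lra.
  by rewrite dE; field.
have du : d < u by rewrite ltNge ud.
rewrite dE in du.
have yE : (1 - u) / (1 - d) = 2 * (1 - u) by rewrite dE; field.
have yin : 0 <= (1 - u) / (1 - d) <= 1 by rewrite yE; apply/andP; split; lra.
rewrite (@inv_onP _ Psi `[0, 1] ((1 - u) / (1 - d)) ((1 - u) / (1 - d))).
- rewrite gtr0_norm; last by lra.
  by rewrite yE dE; field.
- by apply/itvP.
- by rewrite Psi_id.
by move=> x' /itvP x'in; rewrite Psi_id.
Qed.

End S.

Theorem proposition6 (R : realType) (h : R -> R) (delta : R) :
  0 < delta < 1 ->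
  {within `[0, 1], continuous h} ->
  strict_decr_on h 0 delta ->
  strict_incr_on h delta 1 ->
  h 0 = h 1 ->
  is_vtransform (T_h h) delta (Psi_h h delta) /\
  (delta = 1 / 2 ->
   (forall x, 0 <= x <= 1 / 2 -> h (1 / 2 - x) = h (1 / 2 + x)) ->
   (forall x, 0 <= x <= 1 -> Psi_h h delta x = x) /\
   (forall u, 0 <= u <= 1 -> T_h h u = `|2 * u - 1|)).
Proof.
move=> d01 hc hdec hinc h01; split; first exact: part1.
move=> dE hsym; split.
  by move=> x; eapply Psi_id; eassumption.
by move=> u; eapply T_abs; eassumption.
Qed.
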